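(* Let $\Sigma=\{\sigma_{\mathbf{a}|\mathbf{x}}\}$ be a no-signaling assemblage of operators acting on $\mathbb{C}^d$. If there exists a local deterministic box $L$ such that $\sum_{\mathbf{a}|\mathbf{x}\in I_L}\mathrm{rank}(\sigma_{\mathbf{a}|\mathbf{x}})>(|I_L|-1)d$, then $\Sigma$ is not on the edge of the set of no-signaling assemblages.
   Context: Fix $n\ge 1$, integers $\mathcal{A}_i,\mathcal{X}_i\ge 1$ and $d\ge1$; write $\mathbf{a}|\mathbf{x}=a_1\dots a_n|x_1\dots x_n$ with $a_i\in\{0,\dots,\mathcal{A}_i-1\}$, $x_i\in\{0,\dots,\mathcal{X}_i-1\}$. A no-signaling assemblage is a collection of positive semidefinite operators $\sigma_{\mathbf{a}|\mathbf{x}}$ on $\mathbb{C}^d$ with $\sum_{\mathbf{a}}\sigma_{\mathbf{a}|\mathbf{x}}=\rho_B$ for all $\mathbf{x}$ ($\rho_B$ a fixed density operator) and such that for every $I=\{i_1,\dots,i_s\}\subset\{1,\dots,n\}$, $1\le s<n$, the sum $\sum_{a_j:\,j\notin I}\sigma_{\mathbf{a}|\mathbf{x}}$ depends only on $a_{i_k},x_{i_k}$. A local deterministic box $L$ is given by functions $f_i:\{0,\dots,\mathcal{X}_i-1\}\to\{0,\dots,\mathcal{A}_i-1\}$ via $p_L(\mathbf{a}|\mathbf{x})=\prod_i\delta_{a_i,f_i(x_i)}$; $I_L=\{\mathbf{a}|\mathbf{x}:p_L(\mathbf{a}|\mathbf{x})\ne0\}$ (so $|I_L|=\prod_i\mathcal{X}_i$).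 An LHS assemblage is one of the form $\sigma_{\mathbf{a}|\mathbf{x}}=\sum_j q_j\prod_i p^{(A_i)}_j(a_i|x_i)\rho_j$ with probability weights $q_j$, density operators $\rho_j$ and conditional distributions $p^{(A_i)}_j$. $\Sigma$ is on the edge if any decomposition $\Sigma=\epsilon\Sigma_1+(1-\epsilon)\Sigma_2$ with $\epsilon\in[0,1]$, $\Sigma_1$ LHS and $\Sigma_2$ no-signaling forces $\epsilon=0$. *)

(* Defs.v *)
(* Operators on C^d are d x d matrices over C = R[i]. *)
From HB Require Import structures.
From mathcomp Require Import all_boot all_order all_algebra.
From mathcomp Require Export complex.
Set Implicit Arguments. Unset Strict Implicit. Unset Printing Implicit Defensive.
Import Order.TTheory GRing.Theory Num.Theory.
Local Open Scope ring_scope.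

Section Assemblages.
Variable C : numClosedFieldType.

Definition adjmx m n (M : 'M[C]_(m, n)) : 'M[C]_(n, m) := (map_mx Num.conj M)^T.

Definition psd d (M : 'M[C]_d) : Prop :=
  adjmx M = M /\ forall v : 'rV[C]_d, 0 <= (v *m M *m adjmx v) 0 0.

Definition density d (M : 'M[C]_d) : Prop := psd M /\ \tr M = 1.

Variables (n : nat) (A X : 'I_n -> nat).

(* outcome strings a = a_1..a_n and setting strings x = x_1..x_n *)
Definition outs := {dffun forall i : 'I_n, 'I_(A i)}.
Definition sets := {dffun forall i : 'I_n, 'I_(X i)}.

Variable d : nat.

Definition assemblage := outs -> sets -> 'M[C]_d.

Definition no_signaling (sigma : assemblage) : Prop :=
  (forall a x, psd (sigma a x)) /\
  (exists rhoB : 'M[C]_d, density rhoB /\ forall x, \sum_(a : outs) sigma a x = rhoB) /\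
  (forall I : {set 'I_n}, (0 < #|I|)%N -> (#|I| < n)%N ->
     forall (a : outs) (x x' : sets), (forall i, i \in I -> x i = x' i) ->
       \sum_(b : outs | [forall i in I, b i == a i]) sigma b x
       = \sum_(b : outs | [forall i in I, b i == a i]) sigma b x').

Definition LHS_assemblage (sigma : assemblage) : Prop :=
  exists (m : nat) (q : 'I_m -> C) (rho : 'I_m -> 'M[C]_d)
         (p : 'I_m -> forall i : 'I_n, 'I_(X i) -> 'I_(A i) -> C),
    (forall j, 0 <= q j) /\ \sum_j q j = 1 /\
    (forall j, density (rho j)) /\
    (forall j i xi ai, 0 <= p j i xi ai) /\
    (forall j i xi, \sum_(ai : 'I_(A i)) p j i xi ai = 1) /\
    (forall a x, sigma a x = \sum_j (q j * \prod_i p j i (x i) (a i)) *: rho j).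

Definition on_edge (sigma : assemblage) : Prop :=
  forall (eps : C) (s1 s2 : assemblage),
    0 <= eps -> eps <= 1 -> LHS_assemblage s1 -> no_signaling s2 ->
    (forall a x, sigma a x = eps *: s1 a x + (1 - eps) *: s2 a x) ->
    eps = 0.

(* support I_L of the local deterministic box given by f = (f_1..f_n) *)
Definition IL (f : forall i : 'I_n, 'I_(X i) -> 'I_(A i)) : {set outs * sets} :=
  [set ax : outs * sets | [forall i, ax.1 i == f i (ax.2 i)]].

End Assemblages.

(* Main.v *)
Require Import Defs.
From HB Require Import structures.
From mathcomp Require Import all_boot all_order all_algebra complex ring zify.
Import Order.TTheory GRing.Theory Num.Theory.
Set Implicit Arguments. Unset Strict Implicit.
Local Open Scope ring_scope.

Section Herm.
Variable C : numClosedFieldType.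

Lemma adjmxM m n p (A : 'M[C]_(m,n)) (B : 'M[C]_(n,p)) : adjmx (A *m B) = adjmx B *m adjmx A.
Proof. by rewrite /adjmx map_mxM trmx_mul. Qed.
Lemma adjmxD m n (A B : 'M[C]_(m,n)) : adjmx (A + B) = adjmx A + adjmx B.
Proof. by rewrite /adjmx map_mxD linearD. Qed.
Lemma adjmxZ m n a (A : 'M[C]_(m,n)) : adjmx (a *: A) = a^* *: adjmx A.
Proof. by rewrite /adjmx map_mxZ linearZ. Qed.
Lemma adjmxN m n (A : 'M[C]_(m,n)) : adjmx (- A) = - adjmx A.
Proof. by rewrite -scaleN1r adjmxZ rmorphN1 scaleN1r. Qed.
Lemma adjmxK m n (A : 'M[C]_(m,n)) : adjmx (adjmx A) = A.
Proof. by apply/matrixP => i j; rewrite /adjmx !mxE conjCK. Qed.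
Lemma adjmx00 (A : 'M[C]_1) : adjmx A 0 0 = (A 0 0)^*.
Proof. by rewrite /adjmx !mxE. Qed.
Lemma mx1M00 k (X : 'M[C]_(1,k)) (Y : 'M[C]_(k,1)) (Z : 'M[C]_(1,1)) :
  (X *m Y *m Z) 0 0 = (X *m Y) 0 0 * Z 0 0.
Proof. by rewrite mxE big_ord1. Qed.

Definition qf d (M : 'M[C]_d) (v w : 'rV[C]_d) := (v *m M *m adjmx w) 0 0.

Lemma qf_herm d (M : 'M[C]_d) v w : adjmx M = M -> qf M w v = (qf M v w)^*.
Proof.
move=> hM; rewrite /qf -adjmx00 !adjmxM adjmxK hM mulmxA //.
Qed.

Lemma qf_linl d (M : 'M[C]_d) s t v u w :
  qf M (s *: v + t *: u) w = s * qf M v w + t * qf M u w.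
Proof. by rewrite /qf !mulmxDl -!scalemxAl !mxE. Qed.

Lemma qf_linr d (M : 'M[C]_d) s t v u w :
  qf M w (s *: v + t *: u) = s^* * qf M w v + t^* * qf M w u.
Proof. by rewrite /qf adjmxD !adjmxZ !mulmxDr -!scalemxAr !mxE. Qed.

Lemma psd_sub d (M : 'M[C]_d) (u : 'rV[C]_d) (lam : C) : psd M -> 0 <= lam ->
  lam * (qf M u u + 1) ^+ 2 <= 1 ->
  psd (M - lam *: (adjmx (u *m M) *m (u *m M))).
Proof.
move=> [hH hP] hl hl1.
have lamr : lam^* = lam by apply: conj_Creal; exact: ger0_real.
split.
  by rewrite adjmxD adjmxN adjmxZ adjmxM adjmxK lamr hH.
move=> v.
set c := qf M u u. set a := qf M v v. set b := qf M v u.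
have hc : 0 <= c := hP u.
have ha : 0 <= a := hP v.
have cr : c^* = c by apply: conj_Creal; exact: ger0_real.
set s := c + 1.
have sr : s^* = s by rewrite /s rmorphD rmorph1; congr (_ + _).
have hs : 0 < s by rewrite /s ltr_wpDl.
have hbb : 0 <= b * b^* := mul_conjC_ge0 b.
have E : v *m (M - lam *: (adjmx (u *m M) *m (u *m M))) *m adjmx v =
   v *m M *m adjmx v - lam *: ((v *m M *m adjmx u) *m (u *m M *m adjmx v)).
  rewrite mulmxBr mulmxBl -scalemxAr -scalemxAl adjmxM hH !mulmxA //.
rewrite E.
have -> : forall (X Y : 'M[C]_1), (X - lam *: Y) 0 0 = X 0 0 - lam * Y 0 0 by move=> X Y; rewrite !mxE.
rewrite mx1M00 -/a.
have -> : (v *m M *m adjmx u) 0 0 = b by [].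
have -> : (u *m M *m adjmx v) 0 0 = b^* by rewrite -(qf_herm _ _ hH).
have W := hP (s *: v + (- b) *: u).
have EW : qf M (s *: v + (- b) *: u) (s *: v + (- b) *: u) =
   s ^+ 2 * a - (c + 2%:R) * (b * b^*).
  rewrite qf_linl !qf_linr sr -/a -/b -/c (qf_herm _ _ hH) -/b rmorphN /s; ring.
move: W; rewrite /qf in EW; rewrite EW subr_ge0 => W.
rewrite subr_ge0.
have h1 : lam * s ^+ 2 * (b * b^*) <= b * b^*.
  by rewrite -[X in _ <= X]mul1r ler_wpM2r.
have h2 : b * b^* <= (c + 2%:R) * (b * b^*).
  by rewrite -[X in X <= _]mul1r ler_wpM2r // -addn1 natrD addrA lerDr addr_ge0.
have h3 : s ^+ 2 * (lam * (b * b^*)) <= s ^+ 2 * a.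
  by rewrite mulrA [s ^+ 2 * _]mulrC (le_trans h1 (le_trans h2 W)).
by rewrite ler_pM2l ?exprn_gt0 in h3.
Qed.

Lemma real_conj (k : C) : 0 <= k -> k^* = k.
Proof. by move=> h; apply: conj_Creal; exact: ger0_real. Qed.

Lemma psd0 d : psd (0 : 'M[C]_d).
Proof.
split; first by apply/matrixP=> i j; rewrite /adjmx !mxE rmorph0.
by move=> v; rewrite mulmx0 mul0mx mxE.
Qed.

Lemma psd_add d (M N : 'M[C]_d) : psd M -> psd N -> psd (M + N).
Proof.
move=> [h1 p1] [h2 p2]; split; first by rewrite adjmxD h1 h2.
by move=> v; rewrite mulmxDr mulmxDl mxE addr_ge0.
Qed.

Lemma psd_scale d (M : 'M[C]_d) k : 0 <= k -> psd M -> psd (k *: M).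
Proof.
move=> hk [h1 p1]; split; first by rewrite adjmxZ h1 real_conj.
by move=> v; rewrite -scalemxAr -scalemxAl mxE mulr_ge0.
Qed.

Lemma psd_sum d (I : finType) (P : pred I) (F : I -> 'M[C]_d) :
  (forall i, P i -> psd (F i)) -> psd (\sum_(i | P i) F i).
Proof.
move=> h; apply: (big_ind (fun M => psd M)) => //; [exact: psd0 | exact: psd_add].
Qed.

Lemma psd_outer d (w : 'rV[C]_d) : psd (adjmx w *m w).
Proof.
split; first by rewrite adjmxM adjmxK.
move=> v; rewrite mulmxA -(mulmxA (v *m _)) mxE big_ord1.
have -> : (w *m adjmx v) 0 0 = ((v *m adjmx w) 0 0)^*.
  by rewrite -adjmx00 adjmxM adjmxK.
exact: mul_conjC_ge0.
Qed.

Lemma norm_gt0 d (w : 'rV[C]_d) : w != 0 -> 0 < (w *m adjmx w) 0 0.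
Proof.
move=> hw.
have [j hj] : exists j, w 0 j != 0.
  apply/existsP; apply: contra_neqT hw => /existsPn h.
  by apply/matrixP => i j; rewrite (ord1 i) mxE; move: (h j); rewrite negbK => /eqP.
rewrite mxE (bigD1 j) //= ltr_wpDr //.
  by apply: sumr_ge0 => k _; rewrite /adjmx !mxE mul_conjC_ge0.
by rewrite /adjmx !mxE mul_conjC_gt0.
Qed.

Lemma rank_cap_seq d (I : Type) (r : seq I) (F : I -> 'M[C]_d) :
  (\sum_(i <- r) \rank (F i) + d <= \rank (\bigcap_(i <- r) F i)%MS + size r * d)%N.
Proof.
elim: r => [|a r IH]; first by rewrite !big_nil mxrank1; lia.
rewrite !big_cons /=.
set B := (\bigcap_(i <- r) F i)%MS in IH *.
move: (mxrank_sum_cap (F a) B) (rank_leq_col (F a + B)%MS).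
rewrite mulSn. lia.
Qed.
End Herm.

Theorem lemma3 (R : rcfType) (n : nat) (A X : 'I_n -> nat) (d : nat)
  (hn : (1 <= n)%N) (hA : forall i, (1 <= A i)%N) (hX : forall i, (1 <= X i)%N)
  (hd : (1 <= d)%N)
  (sigma : assemblage (R[i]) A X d)
  (hNS : no_signaling sigma)
  (f : forall i : 'I_n, 'I_(X i) -> 'I_(A i))
  (hrank : ((#|IL f| - 1) * d < \sum_(ax in IL f) \rank (sigma ax.1 ax.2))%N) :
  ~ on_edge sigma.
Proof.
move=> hedge.
have [hpsd [[rhoB [hrho hsum]] hmarg]] := hNS.
pose a0 (x : sets X) : outs A := @finfun _ (fun i => 'I_(A i)) (fun i => f i (x i)).
pose x0 : sets X := @finfun _ (fun i => 'I_(X i)) (fun i => Ordinal (hX i)).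
have hIL : forall x, (a0 x, x) \in IL f.
  by move=> x; rewrite inE; apply/forallP => i /=; rewrite ffunE.
have hr := rank_cap_seq (enum (IL f)) (fun ax => sigma ax.1 ax.2).
rewrite big_enum /= big_enum -cardE in hr.
set U := (\bigcap_(ax in IL f) sigma ax.1 ax.2)%MS in hr.
have hU : (0 < \rank U)%N.
  have hr' : (\sum_(ax in IL f) \rank (sigma ax.1 ax.2) + d <= \rank U + #|IL f| * d)%N by exact: hr.
  move: hr' hrank; rewrite mulnBl mul1n; lia.
have hU0 : U != 0 by rewrite -mxrank_eq0 -lt0n.
have [i0 hi0] : exists i, row i U != 0.
  apply/existsP; apply: contra_neqT hU0 => /existsPn h.
  apply/row_matrixP => i; rewrite row0; apply/eqP; move: (h i); rewrite negbK.
  done.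
set psi := row i0 U.
have /sub_bigcapmxP hUs : (U <= U)%MS := submx_refl U.
have hpsi : forall ax, ax \in IL f -> (psi <= sigma ax.1 ax.2)%MS.
  by move=> ax h; apply: submx_trans (row_sub i0 U) (hUs ax h).
set npsi := (psi *m adjmx psi) 0 0.
have hn0 : 0 < npsi := norm_gt0 hi0.
pose u ax := psi *m pinvmx (sigma ax.1 ax.2).
have hu : forall ax, ax \in IL f -> u ax *m sigma ax.1 ax.2 = psi.
  by move=> ax h; apply: mulmxKpV; exact: hpsi.
pose c ax := qf (sigma ax.1 ax.2) (u ax) (u ax).
have hc : forall ax, 0 <= c ax by move=> ax; exact: (hpsd ax.1 ax.2).2.
pose K := \sum_(ax in IL f) (c ax + 1) ^+ 2.
have hK : forall ax, ax \in IL f -> (c ax + 1) ^+ 2 <= K.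
  move=> ax h; rewrite /K (bigD1 ax) //= (@lerDl (R[i])); apply: sumr_ge0 => ay _.
  by apply: exprn_ge0; apply: addr_ge0 (hc ay) ler01.
have hcpos : forall ax, 0 < (c ax + 1) ^+ 2.
  by move=> ax; apply: exprn_gt0; apply: ltr_wpDl (hc ax) ltr01.
have hK0 : 0 < K := lt_le_trans (hcpos _) (hK _ (hIL x0)).
pose lam := K^-1.
pose mu := lam * npsi.
have hmu : 0 < mu by rewrite /mu mulr_gt0 // invr_gt0.
have h1mu : 0 < 1 + mu by rewrite ltr_wpDl // ltW.
pose eps := mu / (1 + mu).
have heps0 : 0 < eps by rewrite /eps divr_gt0.
have heps1 : 1 - eps = (1 + mu)^-1.
  by rewrite /eps; field; exact: lt0r_neq0.
have hepsle1 : eps <= 1.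
  by rewrite -subr_ge0 heps1 invr_ge0 ltW.
pose lam' := eps / npsi.
have hlam' : lam' = lam / (1 + mu).
  rewrite /lam' /eps /mu; field; apply/andP; split; exact: lt0r_neq0.
have hlam'0 : 0 <= lam' by rewrite /lam' ltW // divr_gt0.
have hlam'K : forall ax, ax \in IL f -> lam' * (c ax + 1) ^+ 2 <= 1.
  move=> ax h.
  have hl : lam' <= lam.
    rewrite hlam' ler_pdivrMr //; apply: ler_peMr.
      by rewrite invr_ge0 ltW.
    by rewrite lerDl ltW.
  apply: le_trans (ler_wpM2r (ltW (hcpos ax)) hl) _.
  by rewrite /lam mulrC ler_pdivrMr // mul1r hK.
pose P := npsi^-1 *: (adjmx psi *m psi).
have hP : density P.
  split; first by apply: psd_scale (psd_outer psi); rewrite invr_ge0 ltW.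
  rewrite /P mxtraceZ mxtrace_mulC /mxtrace big_ord1 mulVf //; exact: lt0r_neq0.
pose pL (x : sets X) (b : outs A) : R[i] := (b == a0 x)%:R.
have hsumP : forall x (Q : pred (outs A)), \sum_(b | Q b) pL x b = (Q (a0 x))%:R.
  move=> x Q; rewrite big_mkcond (bigD1 (a0 x)) //= /pL eqxx big1 ?addr0.
    by case: (Q _).
  by move=> b /negbTE hb; rewrite hb; case: (Q b).
have hsumT : forall x, \sum_b pL x b = 1.
  move=> x; rewrite (bigD1 (a0 x)) //= /pL eqxx big1 ?addr0 // => b /negbTE ->.
  done.
pose s1 : assemblage (R[i]) A X d := fun a x => pL x a *: P.
pose s2 : assemblage (R[i]) A X d := fun a x => (1 + mu) *: (sigma a x - eps *: s1 a x).
have hdec : forall a x, sigma a x = eps *: s1 a x + (1 - eps) *: s2 a x.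
  move=> a x; rewrite heps1 /s2 !scalerA mulVf ?scale1r ?lt0r_neq0 //.
  by rewrite addrC subrK.
have hLHS : LHS_assemblage s1.
  exists 1%N, (fun _ => 1), (fun _ => P),
    (fun _ i xi ai => if ai == f i xi then 1 else 0).
  split; first by move=> _; exact: ler01.
  split; first by rewrite big_ord1.
  split; first by move=> _; exact: hP.
  split; first by move=> *; case: ifP.
  split.
    move=> _ i xi; rewrite (bigD1 (f i xi)) //= eqxx big1 ?addr0 // => j /negbTE ->.
    done.
  move=> a x; rewrite big_ord1 mul1r /s1; congr (_ *: _); rewrite /pL.
  case: eqP => [->|hne].
    by rewrite big1 // => i _; rewrite ffunE eqxx.
  have [i hi] : exists i, a i != f i (x i).
    case: (boolP [exists i, a i != f i (x i)]) => [/existsP //|/existsPn h].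
    exfalso; apply: hne; apply/ffunP => i.
    by rewrite ffunE; apply/eqP; move: (h i); rewrite negbK.
  by rewrite (bigD1 i) //= (negbTE hi) mul0r.
have hs2psd : forall a x, psd (s2 a x).
  move=> a x; rewrite /s2; apply: psd_scale; first exact: ltW.
  rewrite /s1 /pL; case: eqP => [ha|_].
    have hin := hIL x; rewrite -ha in hin.
    have H := psd_sub (hpsd a x) hlam'0 (hlam'K _ hin).
    rewrite (hu _ hin) in H.
    have -> : (true%:R : R[i]) = 1 by [].
    rewrite scale1r /P scalerA; rewrite /lam' in H; exact H.
  have -> : (false%:R : R[i]) = 0 by [].
  by rewrite scale0r scaler0 subr0; exact: hpsd.
have hsum2 : forall x, \sum_a s2 a x = (1 + mu) *: (rhoB - eps *: P).
  move=> x; rewrite /s2 -scaler_sumr sumrB hsum -scaler_sumr /s1 -scaler_suml hsumT.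
  by rewrite scale1r.
have hsumQ : forall x (Q : pred (outs A)), \sum_(b | Q b) s2 b x =
    (1 + mu) *: (\sum_(b | Q b) sigma b x - eps *: ((\sum_(b | Q b) pL x b) *: P)).
  move=> x Q; rewrite scaler_suml scaler_sumr -sumrB scaler_sumr.
  apply: eq_bigr => b _; rewrite /s2 /s1; reflexivity.
have hNS2 : no_signaling s2.
  split; first exact: hs2psd.
  split.
    exists ((1 + mu) *: (rhoB - eps *: P)); split; last exact: hsum2.
    split.
      rewrite -(hsum2 x0); apply: psd_sum => a _; exact: hs2psd.
    rewrite linearZ linearB linearZ /= hrho.2 hP.2 mulr1 heps1 mulfV //.
    exact: lt0r_neq0.
  move=> I hI1 hI2 a x x' hxx'.
  have G : forall Q : pred (outs A), \sum_(b | Q b) sigma b x = \sum_(b | Q b) sigma b x' ->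
     Q (a0 x) = Q (a0 x') -> \sum_(b | Q b) s2 b x = \sum_(b | Q b) s2 b x'.
    move=> Q e1 e2.
    refine (eq_trans (hsumQ x Q) (eq_trans _ (esym (hsumQ x' Q)))).
    rewrite e1 (hsumP x Q) (hsumP x' Q) e2; reflexivity.
  apply: G; first exact: (hmarg I hI1 hI2 a x x' hxx').
  by apply: eq_forallb_in => i hi; rewrite !ffunE hxx'.
have := hedge eps s1 s2 (ltW heps0) hepsle1 hLHS hNS2 hdec.
by move=> h; move: heps0; rewrite h ltxx.
Qed.
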